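(* Let $R\subset B$ be domains, $a_1,\ldots,a_s,b\in B\setminus\{0\}$ with $b$ not a unit of $B$, $R[y_1,\ldots,y_s]$ a polynomial ring, $\sigma:R[y_1,\ldots,y_s]\to B$ the $R$-algebra homomorphism with $\sigma(y_i)=a_i$, $\pi:B\to B/bB$ the natural surjection, $\bar\sigma:=\pi\circ\sigma$, and $A:=R[a_1,\ldots,a_s]$. If there exists $\mathcal S\subset R[y_1,\ldots,y_s]$ such that $\ker\bar\sigma$ is the ideal generated by $\mathcal S$ and $\sigma(\mathcal S)\subset bA[b]$, then $A[b^{\pm1}]\cap B=A[b]$ (intersection in $Q(B)$). If moreover $b\in A$, then $A[b^{-1}]\cap B=A$.
   Context: $Q(B)$ denotes the field of fractions of $B$. *)

(* Defs.v *)
From HB Require Import structures.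
From mathcomp Require Import all_boot all_order all_algebra.
From mathcomp Require Import fraction.
From mathcomp Require Import mpoly.
Set Implicit Arguments. Unset Strict Implicit. Unset Printing Implicit Defensive.
Import Order.TTheory GRing.Theory Num.Theory.
Local Open Scope ring_scope.

Notation "x %:F" := (@FracField.tofrac _ x) : ring_scope.

Section Defs.
Context (R B : idomainType) (iota : {rmorphism R -> B}) (s : nat) (a : 'I_s -> B).

Definition sigma (f : {mpoly R[s]}) : B := mmap iota a f.

Definition inA (x : B) : Prop := exists f : {mpoly R[s]}, x = sigma f.

Definition inAb (b x : B) : Prop :=
  exists (n : nat) (c : 'I_n -> B), (forall k, inA (c k)) /\
    x = \sum_(k < n) c k * b ^+ k.

Definition in_ideal_gen (S : {mpoly R[s]} -> Prop) (f : {mpoly R[s]}) : Prop :=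
  exists (n : nat) (g h : 'I_n -> {mpoly R[s]}), (forall i, S (h i)) /\
    f = \sum_(i < n) g i * h i.

Definition in_ker_sigmabar (b : B) (f : {mpoly R[s]}) : Prop :=
  exists c : B, sigma f = b * c.

Definition inB (z : {fraction B}) : Prop := exists c : B, z = c%:F.

Definition inAbpm (b : B) (z : {fraction B}) : Prop :=
  exists (x : B) (n : nat), inAb b x /\ z = x%:F / (b%:F) ^+ n.

Definition inAbinv (b : B) (z : {fraction B}) : Prop :=
  exists (x : B) (n : nat), inA x /\ z = x%:F / (b%:F) ^+ n.

End Defs.

(* Main.v *)
Require Import Defs.
From HB Require Import structures.
From mathcomp Require Import all_boot all_order all_algebra.
From mathcomp Require Import fraction.
From mathcomp Require Import mpoly.
Import Order.TTheory GRing.Theory Num.Theory.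
Local Open Scope ring_scope.

Section Aux.
Context (R B : idomainType) (iota : {rmorphism R -> B}) (s : nat) (a : 'I_s -> B).

Lemma sigmaD f g : sigma iota a (f + g) = sigma iota a f + sigma iota a g.
Proof. by rewrite /sigma rmorphD. Qed.
Lemma sigmaM f g : sigma iota a (f * g) = sigma iota a f * sigma iota a g.
Proof. by rewrite /sigma rmorphM. Qed.
Lemma sigma0 : sigma iota a 0 = 0.
Proof. by rewrite /sigma rmorph0. Qed.
Lemma sigma1 : sigma iota a 1 = 1.
Proof. by rewrite /sigma rmorph1. Qed.

Lemma inA0 : inA iota a 0. Proof. by exists 0; rewrite sigma0. Qed.
Lemma inA1 : inA iota a 1. Proof. by exists 1; rewrite sigma1. Qed.
Lemma inAD x y : inA iota a x -> inA iota a y -> inA iota a (x + y).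
Proof. by move=> [f ->] [g ->]; exists (f + g); rewrite sigmaD. Qed.
Lemma inAM x y : inA iota a x -> inA iota a y -> inA iota a (x * y).
Proof. by move=> [f ->] [g ->]; exists (f * g); rewrite sigmaM. Qed.
Lemma inAX x k : inA iota a x -> inA iota a (x ^+ k).
Proof.
move=> hx; elim: k => [|k IH]; first by rewrite expr0; apply: inA1.
by rewrite exprS; apply: inAM.
Qed.

Variable b : B.
Local Notation inAb := (inAb iota a b).

Definition inAbP x := exists p : {poly B}, (forall k, inA iota a p`_k) /\ x = p.[b].

Lemma inAb_P x : inAb x -> inAbP x.
Proof.
move=> [n [c [hc ->]]].
exists (\poly_(k < n) (if (insub k : option 'I_n) is Some i then c i else 0)).
split.
  move=> k; rewrite coef_poly; case: (k < n)%N; last exact: inA0.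
  by case: insub => [i|] //; apply: inA0.
rewrite horner_poly; apply: eq_bigr => i _; by rewrite valK.
Qed.

Lemma inAP_b x : inAbP x -> inAb x.
Proof.
move=> [p [hp ->]]; exists (size p), (fun i => p`_i); split => //.
by rewrite horner_coef.
Qed.

Lemma inAbP0 : inAbP 0.
Proof. by exists 0; split => [k|]; rewrite ?coef0 ?horner0 //; apply: inA0. Qed.
Lemma inAbPD x y : inAbP x -> inAbP y -> inAbP (x + y).
Proof.
move=> [p [hp ->]] [q [hq ->]]; exists (p + q); split; last by rewrite hornerD.
by move=> k; rewrite coefD; apply: inAD.
Qed.
Lemma inAbPM c x : inA iota a c -> inAbP x -> inAbP (c * x).
Proof.
move=> hc [p [hp ->]]; exists (c%:P * p); split; last by rewrite hornerCM.
by move=> k; rewrite coefCM; apply: inAM.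
Qed.
Lemma inA_AbP c : inA iota a c -> inAbP c.
Proof.
move=> hc; exists c%:P; split; last by rewrite hornerC.
by move=> k; rewrite coefC; case: (k == 0)%N => //; apply: inA0.
Qed.

Lemma inAb_A x : inA iota a b -> inAb x -> inA iota a x.
Proof.
move=> hb [n [c [hc ->]]].
apply: (big_ind (inA iota a)); [exact: inA0 | exact: inAD|].
by move=> i _; apply: inAM => //; apply: inAX.
Qed.

End Aux.
Arguments inAbP {R B} iota {s} a b x.

Theorem lemma5p5 (R B : idomainType) (iota : {rmorphism R -> B})
  (iota_inj : injective iota) (s : nat) (a : 'I_s -> B) (b : B)
  (a_nz : forall i, a i != 0) (b_nz : b != 0) (b_nunit : b \isn't a GRing.unit)
  (S : {mpoly R[s]} -> Prop)
  (hker : forall f, in_ker_sigmabar iota a b f <-> in_ideal_gen S f)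
  (hS : forall f, S f -> exists x, inAb iota a b x /\ sigma iota a f = b * x) :
  (forall z : {fraction B}, (inAbpm iota a b z /\ inB z) <->
      exists x, inAb iota a b x /\ z = x%:F) /\
  (inA iota a b ->
    forall z : {fraction B}, (inAbinv iota a b z /\ inB z) <->
      exists x, inA iota a x /\ z = x%:F).
Proof.
have step : forall x w, inAb iota a b x -> x = b * w -> inAb iota a b w.
  move=> x w [n [c [hc ex]]] exw.
  case: n c hc ex => [|n] c hc ex.
    rewrite big_ord0 in ex; move: exw; rewrite ex => /esym/eqP.
    rewrite mulf_eq0 (negbTE b_nz) /= => /eqP ->.
    by apply: inAP_b; apply: inAbP0.
  rewrite big_ord_recl expr0 mulr1 in ex.
  set T := \sum_(i < n) c (lift ord0 i) * b ^+ i.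
  have eT : \sum_(i < n) c (lift ord0 i) * b ^+ (bump 0 i) = b * T.
    rewrite /T mulr_sumr; apply: eq_bigr => i _.
    by rewrite /bump /= exprS mulrCA.
  rewrite eT in ex.
  have hT : inAb iota a b T by exists n, (fun i => c (lift ord0 i)).
  have [f ef] := hc ord0.
  have hk : in_ker_sigmabar iota a b f.
    by exists (w - T); rewrite -ef mulrBr -exw ex addrK.
  have [m [g [h [hh ef2]]]] := (hker f).1 hk.
  have [y [hy ec]] : exists y, inAbP iota a b y /\ c ord0 = b * y.
    rewrite ef ef2 /sigma raddf_sum.
    apply: (big_ind (fun v => exists y, inAbP iota a b y /\ v = b * y)).
    - by exists 0; split; [exact: inAbP0 | rewrite mulr0].
    - move=> u v [y1 [h1 ->]] [y2 [h2 ->]]; exists (y1 + y2); split.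
        exact: inAbPD.
      by rewrite mulrDr.
    move=> i _; change (exists y, inAbP iota a b y /\ sigma iota a (g i * h i) = b * y); rewrite sigmaM.
    have [y [hy1 hy2]] := hS (h i) (hh i).
    exists (sigma iota a (g i) * y); split.
      by apply: inAbPM; [exists (g i) | apply: inAb_P].
    by rewrite hy2 mulrCA.
  have : b * w = b * (y + T) by rewrite -exw ex ec mulrDr.
  move/(mulfI b_nz) => ->; apply: inAP_b; apply: inAbPD => //.
  exact: inAb_P.
have key : forall n x c, inAb iota a b x -> x = c * b ^+ n -> inAb iota a b c.
  elim=> [|n IH] x c hx ex; first by move: hx; rewrite ex expr0 mulr1.
  apply: (IH (c * b ^+ n)) => //; apply: (step x) => //.
  by rewrite ex exprS mulrCA.
have bF : b%:F != 0 by rewrite tofrac_eq0.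
have frac : forall (x c : B) n, c%:F = x%:F / b%:F ^+ n -> x = c * b ^+ n.
  move=> x c n e; apply/eqP; rewrite -tofrac_eq tofracM tofracXn e.
  by rewrite mulrVK // unitfE expf_neq0.
split.
  move=> z; split.
    move=> [[x [n [hx ez]]] [c ec]]; exists c; split => //.
    apply: (key n x) => //; apply: frac; by rewrite -ec.
  move=> [x [hx ->]]; split; last by exists x.
  by exists x, 0%N; rewrite expr0 divr1.
move=> hb z; split.
  move=> [[x [n [hx ez]]] [c ec]]; exists c; split => //.
  apply: (@inAb_A _ _ iota _ a b) => //; apply: (key n x).
    by apply: inAP_b; apply: inA_AbP.
  by apply: frac; rewrite -ec.
move=> [x [hx ->]]; split; last by exists x.
by exists x, 0%N; rewrite expr0 divr1.
Qed.
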